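(* Let $(S,\delta)$ be a dihedral set and $(E,\delta_E)$ an inscribed polygon with sets $E_{\mathrm{sides}}$, $E_{\mathrm{chords}}$ and a choice of matching sides $s_c\in S_c$ ($c\in E_{\mathrm{chords}}$), and let $\psi:H^\bullet(\mathcal M_{0,E})\cong H^\bullet(\mathcal M_{0,S'})\to H^\bullet(\mathcal M_{0,S})$ be the associated pullback. Let $X$ be a monomial in the classes $\omega_{c}$ for chords $c$ of $(E,\delta_E)$, and denote also by $X$ the same monomial in $H^\bullet(\mathcal M_{0,S})$ (chords of $(E,\delta_E)$ being chords of $(S,\delta)$). Then $\psi(X)-X$ is a linear combination of monomials $\omega_{c_1}\wedge\cdots\wedge\omega_{c_k}$ (chords of $(S,\delta)$) in each of which some $c_i$ crosses some chord of $E_{\mathrm{chords}}$.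
   Context: Dihedral set: finite $S$, $|S|=n\ge3$, identified with the sides of an unoriented $n$-gon up to dihedral symmetry; a chord is a pair of non-consecutive vertices; two chords cross if they meet in the interior. An inscribed polygon $(E,\delta_E)$ in $(S,\delta)$ is a polygon whose vertices are vertices of $(S,\delta)$ and whose sides are either sides or chords of $(S,\delta)$; $E_{\mathrm{sides}}\subset E$ and $E_{\mathrm{chords}}\subset E$ are its sides which are sides, resp. chords, of $(S,\delta)$. Then $S\setminus E_{\mathrm{sides}}=\bigsqcup_{c\in E_{\mathrm{chords}}}S_c$, where $S_c$ is the (nonempty, dihedrally consecutive) set of sides of $(S,\delta)$ cut off from $E$ by $c$. Choosing $s_c\in S_c$ for each $c$, let $S'=E_{\mathrm{sides}}\sqcup\{s_c\}$ with induced dihedral structure $\delta'$; the bijection $E\to S'$ (identity on $E_{\mathrm{sides}}$, $c\mapsto s_c$) is a dihedral isomorphism, inducing $\mathcal M_{0,E}\cong\mathcal M_{0,S'}$ and a correspondence of chords; $\psi$ is this identification followed by pullback along the forgetful map $\mathcal M_{0,S}\to\mathcal M_{0,S'}$. Here $\mathcal M_{0,S}$ is the moduli space of $S$-indexed distinct points on $\mathbb P^1(\mathbb C)$ modulo $\mathrm{PGL}_2(\mathbb C)$, and $\omega_c=\frac1{2\pi i}d\log u_c$ with $u_c$ Brown's dihedral coordinate (sides labelled $1..n$ in dihedral order, $c$ joining the vertex between sides $i,i+1$ to that between $j,j+1$: $u_c=\frac{(z_i-z_{j+1})(z_{i+1}-z_j)}{(z_i-z_j)(z_{i+1}-z_{j+1})}$).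 *)

(* Defs.v *)
From HB Require Import structures.
From mathcomp Require Import all_boot all_order all_algebra.
Set Implicit Arguments. Unset Strict Implicit. Unset Printing Implicit Defensive.
Import Order.TTheory GRing.Theory Num.Theory.

(* ---------- Combinatorics of the dihedral set S = 'I_n ----------
   Sides of (S,delta) are labelled 0..n-1 in dihedral order.
   Vertex i (i : 'I_n) is the vertex between side i and side i+1 (mod n);
   so side i+1 joins vertex i to vertex i+1.
   A chord is an (ordered representative of an unordered) pair of vertices. *)

Definition cdist n (a b : 'I_n) : nat := ((b + n - a) %% n)%N.

Definition in_open n (a b x : 'I_n) : bool := (0 < cdist a x < cdist a b)%N.

Definition is_chordS n (c : 'I_n * 'I_n) : bool :=
  [&& c.1 != c.2, c.2 != ordS c.1 & c.1 != ordS c.2].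

Definition cross n (c d : 'I_n * 'I_n) : bool :=
  uniq [:: c.1; c.2; d.1; d.2] && (in_open c.1 c.2 d.1 != in_open c.1 c.2 d.2).

(* ---------- Inscribed polygon E, given by its vertex set V ----------
   b follows a in the cyclic order of V: the side of E from a to b. *)
Definition consec n (V : {set 'I_n}) (a b : 'I_n) : bool :=
  [&& a \in V, b \in V, a != b & [forall x in V, ~~ in_open a b x]].

Definition prevV n (V : {set 'I_n}) (v : 'I_n) : 'I_n :=
  odflt v [pick u | consec V u v].

Definition E_chord n (V : {set 'I_n}) (c : 'I_n * 'I_n) : bool :=
  consec V c.1 c.2 && (c.2 != ordS c.1).

Definition is_chordE n (V : {set 'I_n}) (c : 'I_n * 'I_n) : bool :=
  [&& c.1 \in V, c.2 \in V, c.1 != c.2, ~~ consec V c.1 c.2 & ~~ consec V c.2 c.1].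

(* For the side of E starting at vertex a (from a
   to the next vertex b of E), sigma a is its image in S': the side a+1 = b of S
   if that side of E is a side of S (forced, since then cdist a b = 1), and the
   chosen s_c in S_c = {sides a+1, ..., b} if it is a chord c. *)
Definition matching_choice n (V : {set 'I_n}) (sigma : 'I_n -> 'I_n) : Prop :=
  forall a b, consec V a b -> (0 < cdist a (sigma a) <= cdist a b)%N.

(* ---------- Differential forms ----------
   Forms on M_{0,S} are pulled back (injectively) to the configuration space
   {z : 'I_n -> C injective} of S-indexed distinct points of the affine line,
   and evaluated pointwise on tangent vectors v : 'I_n -> C. *)
Section Forms.
Variables (C : fieldType) (n : nat).
Implicit Types (z v : 'I_n -> C).

Definition dlog_diff z v (a b : 'I_n) : C := (v a - v b) / (z a - z b).

(* d log of the cross-ratio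
   u = (z_i - z_j')(z_i' - z_j) / ((z_i - z_j)(z_i' - z_j')),
   evaluated at z on v (written out via d log(fg/hk) = dlog f + dlog g - ...) *)
Definition dlog_u z v (i i' j j' : 'I_n) : C :=
  dlog_diff z v i j' + dlog_diff z v i' j - dlog_diff z v i j - dlog_diff z v i' j'.

(* 2 pi i * omega_c for a chord c = (i,j) of S: u_c uses sides i, i+1, j, j+1 *)
Definition omegaS z v (c : 'I_n * 'I_n) : C :=
  dlog_u z v c.1 (ordS c.1) c.2 (ordS c.2).

(* 2 pi i * psi(omega_c) for a chord c of E: the vertex v of E corresponds to
   the vertex of S' between the sides sigma (prevV V v) and sigma v of S';
   pulling back Brown's coordinate along M_{0,S} -> M_{0,S'} gives the same
   cross-ratio in the points z_s, s in S'. *)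
Definition omegaPsi (V : {set 'I_n}) (sigma : 'I_n -> 'I_n) z v (c : 'I_n * 'I_n) : C :=
  dlog_u z v (sigma (prevV V c.1)) (sigma c.1) (sigma (prevV V c.2)) (sigma c.2).

Definition wedge k (om : ('I_n -> C) -> 'I_n * 'I_n -> C)
  (cs : k.-tuple ('I_n * 'I_n)) (vs : 'I_k -> 'I_n -> C) : C :=
  \det (\matrix_(i < k, j < k) om (vs j) (tnth cs i)).

End Forms.

(* Main.v *)
Require Import Defs.
From HB Require Import structures.
From mathcomp Require Import all_boot all_order all_algebra.
From mathcomp Require Import zify ring perm.
Import Order.TTheory GRing.Theory Num.Theory.
Set Implicit Arguments. Unset Strict Implicit. Unset Printing Implicit Defensive.
Lemma cdistE n (a b : 'I_n) : cdist a b = if a <= b then b - a else b + n - a.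
Proof.
rewrite /cdist; have := ltn_ord a; have := ltn_ord b => hb ha.
case: leqP => h.
  have -> : b + n - a = (b - a) + n by lia.
  by rewrite modnDr modn_small //; lia.
by rewrite modn_small //; lia.
Qed.

Definition off n (O x : 'I_n) := cdist O x.

Lemma off_lt n (O x : 'I_n) : off O x < n.
Proof. rewrite /off cdistE; have := ltn_ord x; have := ltn_ord O; case: ifP; lia. Qed.

Lemma off_self n (O : 'I_n) : off O O = 0.
Proof. by rewrite /off cdistE leqnn subnn. Qed.

Lemma off_inj n (O x y : 'I_n) : off O x = off O y -> x = y.
Proof.
rewrite /off !cdistE => h; apply/val_inj => /=; move: h.
have := ltn_ord x; have := ltn_ord y; have := ltn_ord O.
by case: ifP; case: ifP; lia.
Qed.

Lemma off_neq n (O x y : 'I_n) : off O x != off O y -> x != y.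
Proof. by apply: contraNneq => ->. Qed.

Lemma cdist_off n (O x y : 'I_n) : cdist x y =
  if off O x <= off O y then off O y - off O x else off O y + n - off O x.
Proof.
rewrite /off !cdistE.
have := ltn_ord x; have := ltn_ord y; have := ltn_ord O.
by repeat case: ifP; lia.
Qed.

Lemma ordSE n (x : 'I_n) : (ordS x : nat) = if x.+1 == n then 0 else x.+1.
Proof.
rewrite /= ; have := ltn_ord x => h.
case: eqP => e; first by rewrite e modnn.
by rewrite modn_small //; lia.
Qed.

Lemma off_ordS n (O x : 'I_n) :
  off O (ordS x) = if (off O x).+1 == n then 0 else (off O x).+1.
Proof.
rewrite /off !cdistE ordSE.
have := ltn_ord x; have := ltn_ord O.
by repeat case: ifP; lia.
Qed.

Definition sh n (x : 'I_n) t := iter t (@ordS n) x.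

Lemma off_sh n (O x : 'I_n) t : off O x + t < n -> off O (sh x t) = off O x + t.
Proof.
elim: t => [|t IH] h; first by rewrite addn0.
rewrite /sh iterS -/(sh x t) off_ordS IH; last by lia.
by case: ifP; lia.
Qed.

Lemma sh_cdist n (x y : 'I_n) : sh x (cdist x y) = y.
Proof.
apply: (@off_inj _ x); rewrite off_sh off_self ?add0n //.
by have := off_lt x y.
Qed.

Lemma cdist_ordS n (x : 'I_n) : 1 < n -> cdist x (ordS x) = 1.
Proof. move=> h; rewrite (cdist_off x) off_ordS off_self; repeat case: ifP => ?; rewrite /= ?subn0; lia. Qed.

Lemma in_open_ordS n (x y z : 'I_n) : 1 < n -> in_open x y z -> y != ordS x.
Proof.
move=> h; apply: contraTneq => ->.
by rewrite /in_open cdist_ordS //; lia.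
Qed.

Lemma chordE_chordS n (V : {set 'I_n}) c : 1 < n -> is_chordE V c -> is_chordS c.
Proof.
move=> n1 /and5P [aV bV ab nab nba]; rewrite /is_chordS ab /=.
apply/andP; split.
  apply: contra nab => /eqP e; rewrite /consec aV bV ab /=.
  by apply/forallP => x; apply/implyP => _; rewrite /in_open e cdist_ordS //; lia.
apply: contra nba => /eqP e; rewrite /consec aV bV eq_sym ab /=.
by apply/forallP => x; apply/implyP => _; rewrite /in_open e cdist_ordS //; lia.
Qed.

Lemma cross_chordS n (c e : 'I_n * 'I_n) : 1 < n -> cross c e -> is_chordS c.
Proof.
case: c => c1 c2; case: e => e1 e2 n1 /andP [/= u h].
move: u; rewrite /= !inE !negb_or => /and4P [/and3P [h12 h13 h14] /andP [h23 h24] h34 _].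
rewrite /is_chordS /= h12 /=.
apply/andP; split.
  apply: contra h => /eqP e; rewrite /in_open e cdist_ordS //.
  by apply/eqP; lia.
apply: contra h => /eqP e; subst c1.
rewrite /in_open !(cdist_off c2) off_ordS off_self.
have o3 := off_lt c2 e1; have o4 := off_lt c2 e2.
have : off c2 e1 != off c2 c2 by apply: contra h23 => /eqP/off_inj ->.
have : off c2 e2 != off c2 c2 by apply: contra h24 => /eqP/off_inj ->.
have : off c2 e1 != off c2 (ordS c2) by apply: contra h13 => /eqP/off_inj ->.
have : off c2 e2 != off c2 (ordS c2) by apply: contra h14 => /eqP/off_inj ->.
rewrite off_ordS off_self /= ?ltnn /=.
repeat case: ifP => ?; try lia.
all: move=> ????; apply/eqP; transitivity true; [apply/idP|symmetry; apply/idP].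
all: rewrite ltnn add0n; lia.
Qed.

Lemma cdist_self n (x : 'I_n) : cdist x x = 0.
Proof. exact: off_self. Qed.

Lemma exists_next n (V : {set 'I_n}) (a b : 'I_n) :
  a \in V -> b \in V -> a != b -> exists c, consec V a c.
Proof.
move=> aV bV ab.
have Pb : b \in V :\ a by rewrite !inE eq_sym ab.
case: (@arg_minnP _ b (mem (V :\ a)) (cdist a) Pb) => c.
rewrite !inE => /andP [ca cV] hmin.
exists c; rewrite /consec aV cV eq_sym ca /=.
apply/forallP => x; apply/implyP => xV; apply/negP => /andP [h1 h2].
have xa : x != a by apply: contraTneq h1 => ->; rewrite cdist_self.
have := hmin x; rewrite !inE xa xV /= => /(_ isT); lia.
Qed.

Lemma exists_prev n (V : {set 'I_n}) (a b : 'I_n) :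
  a \in V -> b \in V -> a != b -> exists u, consec V u a.
Proof.
move=> aV bV ab.
have Pb : b \in V :\ a by rewrite !inE eq_sym ab.
case: (@arg_minnP _ b (mem (V :\ a)) (fun u => cdist u a) Pb) => u.
rewrite !inE => /andP [ua uV] hmin.
exists u; rewrite /consec uV aV ua /=.
apply/forallP => x; apply/implyP => xV; apply/negP => /andP [h1 h2].
have xa : x != a.
  by apply: contraTneq h2 => ->; rewrite ltnn.
have := hmin x; rewrite !inE xa xV /= => /(_ isT).
rewrite (cdist_off u x a).
have := off_lt u x; have := off_lt u a.
move: h1 h2; rewrite -/(off u x) -/(off u a).
case: ifP; lia.
Qed.

Lemma prevV_consec n (V : {set 'I_n}) (a b : 'I_n) :
  a \in V -> b \in V -> a != b -> consec V (prevV V a) a.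
Proof.
move=> aV bV ab; rewrite /prevV; case: pickP => [u //|h].
have [u hu] := exists_prev aV bV ab.
by have := h u; rewrite hu.
Qed.

Lemma cdist_offP n (O x y : 'I_n) :
  (off O x <= off O y -> cdist x y = off O y - off O x) /\
  (off O y < off O x -> cdist x y = off O y + n - off O x).
Proof. by rewrite (cdist_off O); case: ifP => h; split => //; lia. Qed.

Ltac cd O x y := have := cdist_offP O x y; have := off_lt O x; have := off_lt O y.

Lemma offneq n (O x y : 'I_n) : x != y -> off O x != off O y.
Proof. by apply: contra => /eqP /off_inj ->. Qed.

Lemma cross_intro n (O r s e1 e2 : 'I_n) : off O r != off O s -> off O r != off O e1 ->
  off O r != off O e2 -> off O s != off O e1 -> off O s != off O e2 ->
  off O e1 != off O e2 -> in_open r s e1 != in_open r s e2 -> cross (r,s) (e1,e2).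
Proof.
move=> h1 h2 h3 h4 h5 h6 h; rewrite /cross h andbT /= !inE !negb_or.
by rewrite !(off_neq h1, off_neq h2, off_neq h3, off_neq h4, off_neq h5, off_neq h6).
Qed.

Lemma consec_in n (V : {set 'I_n}) x y z : consec V x y -> z \in V -> ~~ in_open x y z.
Proof. by case/and4P => _ _ _ /forallP h zV; have := h z; rewrite zV. Qed.

Lemma consec_neq n (V : {set 'I_n}) x y : consec V x y -> x != y.
Proof. by case/and4P. Qed.

Lemma consec_V n (V : {set 'I_n}) x y : consec V x y -> (x \in V) && (y \in V).
Proof. by case/and4P => -> ->. Qed.
Ltac cj := repeat match goal with
 | H : is_true (consec _ _ _) |- _ => clear H
 | H : matching_choice _ _ |- _ => clear H
 | H : is_true (_ \in _) |- _ => clear H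
 | H : is_true (~~ consec _ _ _) |- _ => clear H
 | H : is_true (~~ (?x == ?y)) |- _ =>
     let T := type of x in match T with ordinal _ => clear H end
 end.
Ltac slia := cj; lia.

Lemma geo n (V : {set 'I_n}) (sigma : 'I_n -> 'I_n) (a b al ap be bp : 'I_n) :
  1 < n -> is_chordE V (a,b) -> consec V al a -> consec V a ap ->
  consec V be b -> consec V b bp -> matching_choice V sigma ->
  [/\ cdist (sigma al) a < cdist (sigma al) (sigma a),
      cdist (sigma be) b < cdist (sigma be) (sigma b) &
   forall t t', t < cdist (sigma al) (sigma a) -> t' < cdist (sigma be) (sigma b) ->
    (t != cdist (sigma al) a) || (t' != cdist (sigma be) b) ->
    exists e, E_chord V e && cross (sh (sigma al) t, sh (sigma be) t') e].
Proof.
move=> n1 hc cal cap cbe cbp hm.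
case/and5P: hc => /= aV bV ab nab nba.
have o0 : off ap ap = 0 by apply: off_self.
have h1 : 0 < off ap a by have := offneq ap (consec_neq cap); slia.
have h2 : off ap al < off ap a.
  have := consec_in cap (andP (consec_V cal)).1.
  have := offneq ap (consec_neq cal).
  rewrite /in_open; cd ap a al; cd ap a ap; slia.
have bal : b != al by apply: contra nba => /eqP ->.
have bap : b != ap by apply: contra nab => /eqP ->.
have h3 : off ap b < off ap a.
  have := consec_in cap bV; have := offneq ap ab.
  rewrite /in_open; cd ap a b; cd ap a ap; slia.
have h4 : off ap b < off ap al.
  have := consec_in cal bV; have := offneq ap bal.
  rewrite /in_open; cd ap al b; cd ap al a; slia.
have h5 : 0 < off ap b by have := offneq ap bap; slia.
have h6 : off ap be < off ap b.
  have := consec_in cbe (andP (consec_V cap)).2; have := offneq ap (consec_neq cbe).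
  rewrite /in_open; cd ap be ap; cd ap be b; slia.
have h7 : off ap b < off ap bp <= off ap al.
  have := consec_in cbp (andP (consec_V cal)).1; have := offneq ap (consec_neq cbp).
  rewrite /in_open; cd ap b al; cd ap b bp; slia.
have h8 : off ap al < off ap (sigma al) <= off ap a.
  have := hm _ _ cal; cd ap al (sigma al); cd ap al a; slia.
have h9 : off ap a < off ap (sigma al) + cdist (sigma al) (sigma a) <= n.
  have := hm _ _ cap; cd ap a (sigma a); cd ap a ap; cd ap (sigma al) (sigma a); slia.
have h10 : off ap be < off ap (sigma be) <= off ap b.
  have := hm _ _ cbe; cd ap be (sigma be); cd ap be b; slia.
have h11 : off ap b < off ap (sigma be) + cdist (sigma be) (sigma b) <= off ap bp.
  have := hm _ _ cbp; cd ap b (sigma b); cd ap b bp; cd ap (sigma be) (sigma b); slia.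
have h12 : cdist (sigma al) a = off ap a - off ap (sigma al).
  by cd ap (sigma al) a; slia.
have h13 : cdist (sigma be) b = off ap b - off ap (sigma be).
  by cd ap (sigma be) b; slia.
split; [slia|slia|] => t t' ht ht' htt.
set r := sh (sigma al) t; set s := sh (sigma be) t'.
have hr : off ap r = off ap (sigma al) + t by apply: off_sh; slia.
have hs : off ap s = off ap (sigma be) + t' by apply: off_sh; slia.
case: (ltngtP (off ap r) (off ap a)) => hra.
- exists (al, a); apply/andP; split.
    rewrite /E_chord cal /=; apply: (@in_open_ordS _ _ _ r n1).
    by rewrite /in_open; cd ap al r; cd ap al a; slia.
  apply: (cross_intro (O := ap)); last first.
  have -> : in_open r s al = false.
    by apply/negbTE; rewrite /in_open; cd ap r al; cd ap r s; slia.
  have -> : in_open r s a = true.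
    by apply/idP; rewrite /in_open; cd ap r a; cd ap r s; slia.
  by [].
  1-6: slia.
- exists (a, ap); apply/andP; split.
    rewrite /E_chord cap /=; apply: (@in_open_ordS _ _ _ r n1).
    by rewrite /in_open; cd ap a r; cd ap a ap; slia.
  apply: (cross_intro (O := ap)); last first.
  have -> : in_open r s a = false.
    by apply/negbTE; rewrite /in_open; cd ap r a; cd ap r s; slia.
  have -> : in_open r s ap = true.
    by apply/idP; rewrite /in_open; cd ap r ap; cd ap r s; slia.
  by [].
  1-6: slia.
case: (ltngtP (off ap s) (off ap b)) => hsb.
- exists (be, b); apply/andP; split.
    rewrite /E_chord cbe /=; apply: (@in_open_ordS _ _ _ s n1).
    by rewrite /in_open; cd ap be s; cd ap be b; slia.
  apply: (cross_intro (O := ap)); last first.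
  have -> : in_open r s be = true.
    by apply/idP; rewrite /in_open; cd ap r be; cd ap r s; slia.
  have -> : in_open r s b = false.
    by apply/negbTE; rewrite /in_open; cd ap r b; cd ap r s; slia.
  by [].
  1-6: slia.
- exists (b, bp); apply/andP; split.
    rewrite /E_chord cbp /=; apply: (@in_open_ordS _ _ _ s n1).
    by rewrite /in_open; cd ap b s; cd ap b bp; slia.
  apply: (cross_intro (O := ap)); last first.
  have -> : in_open r s b = true.
    by apply/idP; rewrite /in_open; cd ap r b; cd ap r s; slia.
  have -> : in_open r s bp = false.
    by apply/negbTE; rewrite /in_open; cd ap r bp; cd ap r s; slia.
  by [].
  1-6: slia.
slia.
Qed.
Local Open Scope ring_scope.
Lemma tele2 (R : comRingType) (H : nat -> nat -> R) D1 D2 :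
  \sum_(t < D1) \sum_(t' < D2) ((H t t'.+1 - H t t') - (H t.+1 t'.+1 - H t.+1 t')) =
  (H 0%N D2 - H 0%N 0%N) - (H D1 D2 - H D1 0%N).
Proof.
have inner t : \sum_(t' < D2) ((H t t'.+1 - H t t') - (H t.+1 t'.+1 - H t.+1 t')) =
   (H t D2 - H t.+1 D2) - (H t 0%N - H t.+1 0%N).
  rewrite -(big_mkord xpredT (fun t' => (H t t'.+1 - H t t') - (H t.+1 t'.+1 - H t.+1 t'))).
  rewrite -(telescope_sumr (fun t' => H t t' - H t.+1 t') (leq0n D2)).
  by apply: eq_bigr => i _; ring.
under eq_bigr => t _ do rewrite inner.
rewrite -(big_mkord xpredT (fun t => (H t D2 - H t.+1 D2) - (H t 0%N - H t.+1 0%N))).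
have := telescope_sumr (fun t => H t D2 - H t 0%N) (leq0n D1).
move=> e.
have -> : \sum_(0 <= t < D1) ((H t D2 - H t.+1 D2) - (H t 0%N - H t.+1 0%N)) =
   - \sum_(0 <= t < D1) ((H t.+1 D2 - H t.+1 0%N) - (H t D2 - H t 0%N)).
  by rewrite -sumrN; apply: eq_bigr => i _; ring.
by rewrite e; ring.
Qed.

Lemma omegaPsi_sum (C : fieldType) n (V : {set 'I_n}) (sigma : 'I_n -> 'I_n) z v
  (c : 'I_n * 'I_n) :
  omegaPsi V sigma z v c =
  \sum_(t < cdist (sigma (prevV V c.1)) (sigma c.1))
   \sum_(t' < cdist (sigma (prevV V c.2)) (sigma c.2))
      omegaS (C := C) z v (sh (sigma (prevV V c.1)) t, sh (sigma (prevV V c.2)) t').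
Proof.
set p := sigma (prevV V c.1); set q := sigma (prevV V c.2).
pose H t t' := dlog_diff z v (sh p t) (sh q t').
have := tele2 H (cdist p (sigma c.1)) (cdist q (sigma c.2)).
rewrite /H !sh_cdist /= => e.
rewrite /omegaPsi -/p -/q.
have -> : dlog_u z v p (sigma c.1) q (sigma c.2) =
   (dlog_diff z v p (sigma c.2) - dlog_diff z v p q) -
   (dlog_diff z v (sigma c.1) (sigma c.2) - dlog_diff z v (sigma c.1) q).
  rewrite /dlog_u; set A := dlog_diff _ _ _ _; set B := dlog_diff _ _ _ _;
  set A' := dlog_diff _ _ _ _; set B' := dlog_diff _ _ _ _.
  ring.
rewrite -e; apply: eq_bigr => t _; apply: eq_bigr => t' _.
rewrite /omegaS /dlog_u /=.
set A := dlog_diff _ _ _ _; set B := dlog_diff _ _ _ _;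
  set A' := dlog_diff _ _ _ _; set B' := dlog_diff _ _ _ _.
ring.
Qed.

Lemma det_multi (R : comRingType) k (J : finType) (Qf : 'I_k -> pred J)
  (F : 'I_k -> J -> 'I_k -> R) :
  \det (\matrix_(i, j) \sum_(jj | Qf i jj) F i jj j) =
  \sum_(g in family Qf) \det (\matrix_(i, j) F i (g i) j).
Proof.
rewrite /determinant.
transitivity (\sum_(s : 'S_k) \sum_(g in family Qf) (-1) ^+ s * \prod_i F i (g i) (s i)).
  apply: eq_bigr => s _; rewrite -mulr_sumr; congr (_ * _).
  rewrite (eq_bigr (fun i => \sum_(jj | Qf i jj) F i jj (s i))); last by move=> i _; rewrite mxE.
  exact: bigA_distr_big_dep.
rewrite exchange_big /=; apply: eq_bigr => g _; apply: eq_bigr => s _.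
by congr (_ * _); apply: eq_bigr => i _; rewrite mxE.
Qed.

Lemma pair_sum (R : nmodType) n D1 D2 (F : nat -> nat -> R) :
  (D1 <= n)%N -> (D2 <= n)%N ->
  \sum_(t < D1) \sum_(t' < D2) F t t' =
  \sum_(j : 'I_n * 'I_n | (j.1 < D1)%N && (j.2 < D2)%N) F j.1 j.2.
Proof.
move=> h1 h2; rewrite (big_ord_widen n (fun t => \sum_(t' < D2) F t t') h1).
under eq_bigr => i _ do rewrite (big_ord_widen n (fun t' => F i t') h2).
by rewrite pair_big_dep.
Qed.
Lemma geo_c n (V : {set 'I_n}) (sigma : 'I_n -> 'I_n) (c : 'I_n * 'I_n) :
  (1 < n)%N -> is_chordE V c -> matching_choice V sigma ->
  [/\ (cdist (sigma (prevV V c.1)) c.1 < cdist (sigma (prevV V c.1)) (sigma c.1))%N,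
      (cdist (sigma (prevV V c.2)) c.2 < cdist (sigma (prevV V c.2)) (sigma c.2))%N &
   forall t t', (t < cdist (sigma (prevV V c.1)) (sigma c.1))%N ->
     (t' < cdist (sigma (prevV V c.2)) (sigma c.2))%N ->
    (t != cdist (sigma (prevV V c.1)) c.1) || (t' != cdist (sigma (prevV V c.2)) c.2) ->
    exists e, E_chord V e && cross (sh (sigma (prevV V c.1)) t, sh (sigma (prevV V c.2)) t') e].
Proof.
case: c => a b n1 hc hm; have hc' := hc.
case/and5P: hc' => /= aV bV ab _ _.
have ba : b != a by rewrite eq_sym.
have [ap cap] := exists_next aV bV ab.
have [bp cbp] := exists_next bV aV ba.
exact: (geo n1 hc (prevV_consec aV bV ab) cap (prevV_consec bV aV ba) cbp hm).
Qed.

Theorem lemma4 (C : numClosedFieldType) (n : nat) (V : {set 'I_n})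
  (sigma : 'I_n -> 'I_n) (k : nat) (X : k.-tuple ('I_n * 'I_n)) :
  (3 <= n)%N -> (3 <= #|V|)%N -> matching_choice V sigma ->
  all (is_chordE V) X ->
  exists L : seq (C * k.-tuple ('I_n * 'I_n)),
    all (fun p : C * k.-tuple ('I_n * 'I_n) => all (@is_chordS n) p.2 &&
           [exists i : 'I_k, exists e : 'I_n * 'I_n,
              E_chord V e && cross (tnth p.2 i) e]) L /\
    forall z : 'I_n -> C, injective z ->
    forall vs : 'I_k -> 'I_n -> C,
      wedge (omegaPsi V sigma z) X vs - wedge (omegaS z) X vs
      = \sum_(p <- L) p.1 * wedge (omegaS z) p.2 vs.
Proof.
move=> n3 _ hm /all_tnthP hX.
have n1 : (1 < n)%N by apply: leq_trans n3.
pose P i := sigma (prevV V (tnth X i).1).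
pose Q i := sigma (prevV V (tnth X i).2).
pose D1 i := cdist (P i) (sigma (tnth X i).1).
pose D2 i := cdist (Q i) (sigma (tnth X i).2).
pose Qf i (j : 'I_n * 'I_n) := (j.1 < D1 i)%N && (j.2 < D2 i)%N.
pose ch i (j : 'I_n * 'I_n) := (sh (P i) j.1, sh (Q i) j.2).
have hpsi (z : 'I_n -> C) vs : wedge (omegaPsi V sigma z) X vs =
   \sum_(g in family Qf) \det (\matrix_(i, j) omegaS z (vs j) (ch i (g i))).
  rewrite /wedge.
  transitivity (\det (\matrix_(i, j) \sum_(jj | Qf i jj) omegaS z (vs j) (ch i jj)));
    last exact: det_multi.
  congr (\det _); apply/matrixP => i j; rewrite !mxE.
  rewrite omegaPsi_sum.
  by apply: (@pair_sum _ n _ _ (fun t t' => omegaS z (vs j) (sh (P i) t, sh (Q i) t')));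
    exact: ltnW (off_lt _ _).
pose g0 : {ffun 'I_k -> 'I_n * 'I_n} :=
  [ffun i => (Ordinal (off_lt (P i) (tnth X i).1), Ordinal (off_lt (Q i) (tnth X i).2))].
have g0F : g0 \in family Qf.
  apply/familyP => i; rewrite ffunE /Qf /=.
  by case: (geo_c n1 (hX i) hm) => h1 h2 _; apply/andP; split.
have hg0 i : ch i (g0 i) = tnth X i.
  by rewrite /ch ffunE /= !sh_cdist; case: (tnth X i).
exists [seq ((1 : C), mktuple (fun i => ch i (g i))) | g : {ffun 'I_k -> 'I_n * 'I_n} <- enum [pred g | (g \in family Qf) && (g != g0)]].
split.
  rewrite all_map; apply/allP => g; rewrite mem_enum inE => /andP [gF gg0].
  have crossof i : g i != g0 i -> exists ee, E_chord V ee && cross (ch i (g i)) ee.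
    move=> e; have /andP [ht ht'] := familyP gF i.
    case: (geo_c n1 (hX i) hm) => _ _ H.
    apply: H => //; move: e; rewrite ffunE; case: (g i) => x y /=.
    by rewrite xpair_eqE negb_and -!val_eqE.
  apply/andP; split.
    apply/all_tnthP => i; rewrite tnth_mktuple.
    case: (eqVneq (g i) (g0 i)) => e.
      by rewrite e hg0; apply: (chordE_chordS n1 (hX i)).
    by have [ee /andP [_ hcr]] := crossof i e; apply: cross_chordS n1 hcr.
  case: (pickP (fun i => g i != g0 i)) => [i hi|h]; last first.
    have gg : g = g0 by apply/ffunP => j; have := h j; rewrite /= => /negbFE/eqP.
    by rewrite gg eqxx in gg0.
  apply/existsP; exists i; rewrite tnth_mktuple.
  have [ee hee] := crossof i hi; apply/existsP; exists ee; exact: hee.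
move=> z _ vs.
rewrite hpsi (bigD1 g0 g0F) /=.
have -> : \det (\matrix_(i, j) omegaS z (vs j) (ch i (g0 i))) = wedge (omegaS z) X vs.
  by rewrite /wedge; congr (\det _); apply/matrixP => i j; rewrite !mxE hg0.
rewrite addrC addrK big_map big_enum /=.
apply: eq_big => [g|g _]; first by rewrite !inE.
rewrite mul1r /wedge; congr (\det _); apply/matrixP => i j; rewrite !mxE tnth_mktuple.
done.
Qed.
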